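(* Let $A,B\in\mathbb{T}^{m\times n}$ have integer finite entries, with every column of $A$ and every row of $B$ containing a finite entry, and let $F=A^\sharp\circ B$. Suppose there exists $v\in\mathbb{R}^n$ with $F(v)=\rho(F)+v$ and $\rho(F)\ne0$. Consider value iteration: $u^0=0$, $u^{\ell+1}=F(u^\ell)$, continued while $\max_iu^\ell_i\ge0$ and $\min_iu^\ell_i\le0$, with $N$ the first index where this fails. Then $N\le 2n^2W$.
   Context: $\mathbb{T}=\mathbb{R}\cup\{-\infty\}$. $(B\odot x)_i=\max_j(B_{ij}+x_j)$; $A^\sharp(y)_j=\min_i(-A_{ij}+y_i)$ with $(+\infty)+(-\infty)=+\infty$. The scalar $\rho(F)$ with $F(v)=\rho(F)+v$ for some $v\in\mathbb{R}^n$ is unique (ergodic constant). $W=\max\{|A_{ij}-B_{ih}|: A_{ij}\ne-\infty,\ B_{ih}\ne-\infty\}$. *)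

(* Defs.v *)
(* Tropical semiring T = R ∪ {-oo}; entries of A, B are
   integers or -oo, encoded as option int (None = -oo). *)
From HB Require Import structures.
From mathcomp Require Import all_boot all_order all_algebra.
Set Implicit Arguments. Unset Strict Implicit. Unset Printing Implicit Defensive.
Import Order.TTheory GRing.Theory Num.Theory.
Local Open Scope ring_scope.

(* Extended reals R ∪ {-oo, +oo}, needed for the intermediate values of A^# . *)
Inductive ext (R : Type) := ENInf | EFin of R | EPInf.
Arguments ENInf {R}. Arguments EPInf {R}. Arguments EFin {R} _.

Section Ext.
Variable R : realFieldType.

Definition ele (x y : ext R) : bool :=
  match x, y with
  | ENInf, _ => true
  | _, EPInf => true
  | EFin a, EFin b => a <= b
  | _, _ => false
  end.

Definition emax (x y : ext R) : ext R := if ele x y then y else x.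
Definition emin (x y : ext R) : ext R := if ele x y then x else y.

Definition eshift (c : R) (x : ext R) : ext R :=
  match x with ENInf => ENInf | EFin r => EFin (c + r) | EPInf => EPInf end.

Definition tmulE (b : option int) (x : ext R) : ext R :=
  match b with None => ENInf | Some b => eshift (b%:~R) x end.

(* -A_ij + y_i, with the convention (+oo) + (-oo) = +oo *)
Definition tsharpE (a : option int) (y : ext R) : ext R :=
  match a with None => EPInf | Some a => eshift (- a%:~R) y end.

Definition tprod (m n : nat) (B : 'M[option int]_(m, n)) (x : 'I_n -> ext R)
  : 'I_m -> ext R :=
  fun i => \big[emax/ENInf]_(h < n) tmulE (B i h) (x h).

Definition tsharp (m n : nat) (A : 'M[option int]_(m, n)) (y : 'I_m -> ext R)
  : 'I_n -> ext R :=
  fun j => \big[emin/EPInf]_(i < m) tsharpE (A i j) (y i).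

Definition Fop (m n : nat) (A B : 'M[option int]_(m, n)) (x : 'I_n -> ext R)
  : 'I_n -> ext R := tsharp A (tprod B x).

Definition viter (m n : nat) (A B : 'M[option int]_(m, n)) (l : nat)
  : 'I_n -> ext R := iter l (Fop A B) (fun _ => EFin 0).

Definition vcont (n : nat) (u : 'I_n -> ext R) : bool :=
  ele (EFin 0) (\big[emax/ENInf]_(i < n) u i) &&
  ele (\big[emin/EPInf]_(i < n) u i) (EFin 0).
End Ext.

Definition Wconst (m n : nat) (A B : 'M[option int]_(m, n)) : nat :=
  \max_(i < m) \max_(j < n) \max_(h < n)
    match A i j, B i h with
    | Some a, Some b => absz (a - b)%R
    | _, _ => 0%N
    end.

(* Main.v *)
Require Import Defs.
From HB Require Import structures.
From mathcomp Require Import all_boot all_order all_algebra.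
From mathcomp Require Import zify ring lra.
Import Order.TTheory GRing.Theory Num.Theory.
Set Implicit Arguments. Unset Strict Implicit. Unset Printing Implicit Defensive.
Local Open Scope ring_scope.

Lemma ele_refl (R : realFieldType) (x : ext R) : ele x x.
Proof. by case: x => //= a. Qed.

Lemma ele_trans (R : realFieldType) (x y z : ext R) : ele x y -> ele y z -> ele x z.
Proof.
by case: x => [|a|]; case: y => [|b|]; case: z => [|c|] //=; apply: le_trans.
Qed.

Lemma ele_total (R : realFieldType) (x y : ext R) : ele x y || ele y x.
Proof. by case: x => [|a|]; case: y => [|b|] //=; apply: le_total. Qed.

Lemma emin_cases (R : realFieldType) (x y : ext R) : emin x y = x \/ emin x y = y.
Proof. by rewrite /emin; case: ifP; auto. Qed.

Lemma emax_cases (R : realFieldType) (x y : ext R) : emax x y = x \/ emax x y = y.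
Proof. by rewrite /emax; case: ifP; auto. Qed.

Lemma ele_emin (R : realFieldType) (x a b : ext R) :
  ele x (emin a b) = ele x a && ele x b.
Proof.
rewrite /emin; case: ifP => hab.
  apply/idP/andP => [h|[]//]; split => //; exact: ele_trans h hab.
have hba : ele b a by move: (ele_total a b); rewrite hab.
apply/idP/andP => [h|[]//]; split => //; exact: ele_trans h hba.
Qed.

Lemma emax_ele (R : realFieldType) (x a b : ext R) :
  ele (emax a b) x = ele a x && ele b x.
Proof.
rewrite /emax; case: ifP => hab.
  apply/idP/andP => [h|[]//]; split => //; exact: ele_trans hab h.
have hba : ele b a by move: (ele_total a b); rewrite hab.
apply/idP/andP => [h|[]//]; split => //; exact: ele_trans hba h.
Qed.

Lemma ebigmin_le (R : realFieldType) (I : eqType) (r : seq I) (F : I -> ext R) i :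
  i \in r -> ele (\big[@emin R/EPInf]_(k <- r) F k) (F i).
Proof.
elim: r => [//|a r IH]; rewrite inE big_cons => /orP [/eqP ->|hi].
  by move: (ele_refl (emin (F a) (\big[@emin R/EPInf]_(j <- r) F j))); rewrite ele_emin => /andP[].
move: (ele_refl (emin (F a) (\big[@emin R/EPInf]_(j <- r) F j))); rewrite ele_emin => /andP[_ h].
exact: ele_trans h (IH hi).
Qed.

Lemma ele_bigmax (R : realFieldType) (I : eqType) (r : seq I) (F : I -> ext R) i :
  i \in r -> ele (F i) (\big[@emax R/ENInf]_(k <- r) F k).
Proof.
elim: r => [//|a r IH]; rewrite inE big_cons => /orP [/eqP ->|hi].
  by move: (ele_refl (emax (F a) (\big[@emax R/ENInf]_(j <- r) F j))); rewrite emax_ele => /andP[].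
move: (ele_refl (emax (F a) (\big[@emax R/ENInf]_(j <- r) F j))); rewrite emax_ele => /andP[_ h].
exact: ele_trans (IH hi) h.
Qed.

Lemma ebigmin_att (R : realFieldType) (I : Type) (r : seq I) (F : I -> ext R) :
  \big[@emin R/EPInf]_(k <- r) F k = EPInf \/ exists i, \big[@emin R/EPInf]_(k <- r) F k = F i.
Proof.
apply: (big_ind (fun x => x = EPInf \/ exists i, x = F i)); [by left| |by eauto].
move=> x y hx hy; case: (emin_cases x y) => ->; done.
Qed.

Lemma ebigmax_att (R : realFieldType) (I : Type) (r : seq I) (F : I -> ext R) :
  \big[@emax R/ENInf]_(k <- r) F k = ENInf \/ exists i, \big[@emax R/ENInf]_(k <- r) F k = F i.
Proof.
apply: (big_ind (fun x => x = ENInf \/ exists i, x = F i)); [by left| |by eauto].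
move=> x y hx hy; case: (emax_cases x y) => ->; done.
Qed.

Lemma eshift_mono (R : realFieldType) c (x y : ext R) : ele x y -> ele (eshift c x) (eshift c y).
Proof. by case: x => [|a|]; case: y => [|b|] //=; rewrite lerD2l. Qed.

Lemma sum_lowW (W l : nat) (c : nat -> int) :
  (forall t, (t < l)%N -> - (W%:Z) <= c t) -> - ((l * W)%N%:Z) <= \sum_(0 <= t < l) c t.
Proof.
elim: l => [|l IH] h; first by rewrite big_geq.
rewrite big_nat_recr //=.
have h1 := IH (fun t ht => h t (ltnW ht)).
have h2 := h l (ltnSn l).
move: h1 h2; set s := \sum_(0 <= i < l) c i; set x := c l; rewrite mulSn PoszD; move=> h1 h2. lia.
Qed.

Lemma cycle_bound (R : realFieldType) (n W : nat) (v : 'I_n -> R) (rho : R) :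
  0 < rho -> forall l (p : nat -> 'I_n) (c : nat -> int),
  (forall t, (t < l)%N -> rho + v (p t) - v (p t.+1) <= (c t)%:~R /\ - (W%:Z) <= c t) ->
  ((l %/ n)%N%:Z - (n.-1 * W)%N%:Z <= \sum_(0 <= t < l) c t).
Proof.
move=> rpos l; elim/ltn_ind: l => l IH p c hc.
have n0 : (0 < n)%N by apply: leq_ltn_trans (leq0n _) (ltn_ord (p 0%N)).
case: (ltnP l n) => hln.
  rewrite divn_small //.
  have := sum_lowW (fun t ht => (hc t ht).2).
  have : (l * W <= n.-1 * W)%N by apply: leq_mul => //; lia.
  lia.
pose f := fun t : 'I_n.+1 => p t.
have [a [b [hab hb hpab]]] : exists a b, [/\ (a < b)%N, (b <= n)%N & p a = p b].
  case: (boolP (injectiveb f)) => [/injectiveP inj | /injectivePn [x [y hxy hf]]].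
    by have := @leq_card _ _ f inj; rewrite !card_ord ltnn.
  rewrite /f in hf.
  case: (ltngtP x y) => hxy'.
  - by exists x, y; split => //; rewrite -ltnS.
  - by exists y, x; split => //; rewrite -ltnS.
  - by move: hxy; rewrite (val_inj hxy') eqxx.
set d := (b - a)%N.
have d1 : (0 < d)%N by rewrite subn_gt0.
have dn : (d <= n)%N by rewrite /d; lia.
pose p' := fun t => if (t < a)%N then p t else p (t + d)%N.
pose c' := fun t => if (t < a)%N then c t else c (t + d)%N.
have hl' : (l - d < l)%N by lia.
have hc' : forall t, (t < l - d)%N ->
    rho + v (p' t) - v (p' t.+1) <= (c' t)%:~R /\ - (W%:Z) <= c' t.
  move=> t ht; rewrite /p' /c'.
  case: (ltnP t a) => hta.
    case: (ltnP t.+1 a) => hta2; first by apply: hc; lia.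
    have -> : (t.+1 + d)%N = b by rewrite /d; lia.
    rewrite -hpab.
    have -> : a = t.+1 by lia.
    by apply: hc; lia.
  rewrite ifF; last by lia.
  have -> : (t.+1 + d)%N = (t + d).+1 by lia.
  by apply: hc; lia.
have IH' := IH _ hl' p' c' hc'.
have hq : (l %/ n <= (l - d) %/ n + 1)%N.
  have : (l <= (l - d) + 1 * n)%N by lia.
  move/(leq_div2r n); rewrite addnC divnMDl //; lia.
have split1 : \sum_(0 <= t < l) c t =
   \sum_(0 <= t < a) c t + \sum_(a <= t < b) c t + \sum_(b <= t < l) c t.
  rewrite -big_cat_nat //; last by lia.
  by rewrite -big_cat_nat //; lia.
have split2 : \sum_(0 <= t < l - d) c' t = \sum_(0 <= t < a) c t + \sum_(b <= t < l) c t.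
  rewrite (big_cat_nat _ (n:=a)) //; last by lia.
  congr (_ + _).
    by apply: eq_big_nat => t /andP[_ ht]; rewrite /c' ht.
  have -> : b = (a + d)%N by rewrite /d; lia.
  rewrite big_addn; apply: eq_big_nat => t /andP[ht _].
  by rewrite /c'; have -> : (t < a)%N = false by lia.
have cyc : 1 <= \sum_(a <= t < b) c t.
  suff : (0 : R) < (\sum_(a <= t < b) c t)%:~R by rewrite ltr0z; lia.
  rewrite rmorph_sum /=.
  apply: (lt_le_trans _ (ler_sum_nat (F := fun t => rho + v (p t) - v (p t.+1)) _)); last first.
    by move=> t /andP[_ ht]; apply: (hc t _).1; lia.
  rewrite sumrB big_split /= sumr_const_nat.
  have := telescope_sumr (fun k => v (p k)) (ltnW hab).
  rewrite /= => ht.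
  have -> : \sum_(a <= i < b) v (p i.+1) = \sum_(a <= i < b) v (p i) + (v (p b) - v (p a)).
    by rewrite -ht sumrB addrC subrK.
  rewrite hpab subrr addr0. rewrite addrK.
  by rewrite pmulrn_lgt0.
move: IH' cyc; rewrite split1 split2.
move: hq; move: (l %/ n)%N ((l - d) %/ n)%N => q q' hq.
lia.
Qed.

Lemma W_bound m n (A B : 'M[option int]_(m, n)) i j h a b :
  A i j = Some a -> B i h = Some b ->
  - ((Wconst A B)%:Z) <= b - a /\ b - a <= (Wconst A B)%:Z.
Proof.
move=> ha hb.
have : (absz (a - b) <= Wconst A B)%N.
  rewrite /Wconst.
  apply: leq_trans (leq_bigmax i); apply: leq_trans (leq_bigmax j).
  apply: leq_trans (leq_bigmax h); by rewrite ha hb.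
move: (Wconst A B) => w hw.
have : `|a - b| <= w%:Z by rewrite -abszE lez_nat.
rewrite ler_norml; lia.
Qed.

Lemma sigma_ex (R : realFieldType) m n (B : 'M[option int]_(m, n)) (v : 'I_n -> R) i :
  (exists h, isSome (B i h)) ->
  exists h b, B i h = Some b /\
    \big[@emax R/ENInf]_(k < n) tmulE (B i k) (EFin (v k)) = EFin (b%:~R + v h).
Proof.
case=> h1 hs1.
have hle := ele_bigmax (fun k => tmulE (B i k) (EFin (v k))) (mem_index_enum h1).
case: (ebigmax_att (index_enum 'I_n) (fun k => tmulE (B i k) (EFin (v k)))) => [e|[h0 e]].
  by move: hle; rewrite e; case: (B i h1) hs1.
move: hle; rewrite e.
case hb0: (B i h0) => [b0|] /=.
  by move=> _; exists h0, b0.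
by case: (B i h1) hs1.
Qed.

Definition prep (T : Type) (x : T) (f : nat -> T) : nat -> T :=
  fun t => if t is t'.+1 then f t' else x.

Lemma sum_prep (c0 : int) c l :
  \sum_(0 <= t < l.+1) prep c0 c t = c0 + \sum_(0 <= t < l) c t.
Proof. by rewrite big_nat_recl. Qed.

Lemma lower_walk (R : realFieldType) m n (A B : 'M[option int]_(m, n))
  (hA : forall j : 'I_n, exists i : 'I_m, isSome (A i j))
  (hB : forall i : 'I_m, exists h : 'I_n, isSome (B i h))
  (rho : R) (v : 'I_n -> R)
  (hv : forall j, Fop A B (fun h => EFin (v h)) j = EFin (rho + v j)) :
  forall l j, exists (p : nat -> 'I_n) (c : nat -> int), p 0%N = j /\
    (forall t, (t < l)%N -> rho + v (p t) - v (p t.+1) <= (c t)%:~R /\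
        - ((Wconst A B)%:Z) <= c t /\ c t <= (Wconst A B)%:Z) /\
    ele (EFin ((\sum_(0 <= t < l) c t)%:~R)) (@viter R m n A B l j).
Proof.
elim=> [|l IH] j.
  exists (fun _ => j), (fun _ => 0); split => //; split => //. by rewrite big_geq //= lexx.
set u := viter R A B l.
have step : forall i a, A i j = Some a -> exists (p : nat -> 'I_n) (c : nat -> int), p 0%N = j /\
    (forall t, (t < l.+1)%N -> rho + v (p t) - v (p t.+1) <= (c t)%:~R /\
        - ((Wconst A B)%:Z) <= c t /\ c t <= (Wconst A B)%:Z) /\
    ele (EFin ((\sum_(0 <= t < l.+1) c t)%:~R))
        (tsharpE (A i j) (\big[@emax R/ENInf]_(h < n) tmulE (B i h) (u h))).
  move=> i a ha.
  have [h [b [hb hmax]]] := sigma_ex v (hB i).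
  have [p [c [p0 [hpc hS]]]] := IH h.
  exists (prep j p), (prep (b - a) c); split => //; split.
    case=> [_|t ht]; rewrite /prep /=; last by apply: hpc.
    rewrite p0; split; last exact: W_bound ha hb.
    have := hv j; rewrite /Fop /tsharp /tprod => e.
    have := ebigmin_le (fun i => tsharpE (A i j)
        (\big[@emax R/ENInf]_(h < n) tmulE (B i h) (EFin (v h)))) (mem_index_enum i).
    rewrite e /= ha hmax /= rmorphB /=; lra.
  rewrite sum_prep ha.
  apply: (@ele_trans _ _ (eshift (- a%:~R) (tmulE (B i h) (u h)))); last first.
    exact: (eshift_mono _ (ele_bigmax (fun k => tmulE (B i k) (u k)) (mem_index_enum h))).

  rewrite hb.
  move: hS; rewrite /u; case: (viter R A B l h) => [|x|] //= hS.
  by rewrite rmorphD rmorphB /=; lra.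
rewrite /viter iterS -/(viter R A B l) -/u /Fop /tsharp /tprod.
pose F := (fun i : 'I_m => tsharpE (A i j) (\big[@emax R/ENInf]_(h < n) tmulE (B i h) (u h))).
have inf_case : exists (p : nat -> 'I_n) (c : nat -> int), p 0%N = j /\
    (forall t, (t < l.+1)%N -> rho + v (p t) - v (p t.+1) <= (c t)%:~R /\
        - ((Wconst A B)%:Z) <= c t /\ c t <= (Wconst A B)%:Z) /\
    ele (EFin ((\sum_(0 <= t < l.+1) c t)%:~R)) (@EPInf R).
  have [i1 hi1] := hA j.
  case ha1 : (A i1 j) hi1 => [a1|] // _.
  have [p [c [? [? _]]]] := step i1 a1 ha1.
  by exists p, c.
case: (ebigmin_att (index_enum 'I_m) F) => [e|[i0 e]]; rewrite -/F e //.
rewrite /F; case ha0 : (A i0 j) => [a0|] /=; last by [].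
have := step i0 a0 ha0; by rewrite ha0.
Qed.

Lemma upper_walk (R : realFieldType) m n (A B : 'M[option int]_(m, n))
  (hA : forall j : 'I_n, exists i : 'I_m, isSome (A i j))
  (hB : forall i : 'I_m, exists h : 'I_n, isSome (B i h))
  (rho : R) (v : 'I_n -> R)
  (hv : forall j, Fop A B (fun h => EFin (v h)) j = EFin (rho + v j)) :
  forall l j, exists (p : nat -> 'I_n) (c : nat -> int), p 0%N = j /\
    (forall t, (t < l)%N -> (c t)%:~R <= rho + v (p t) - v (p t.+1) /\
        - ((Wconst A B)%:Z) <= c t /\ c t <= (Wconst A B)%:Z) /\
    ele (@viter R m n A B l j) (EFin ((\sum_(0 <= t < l) c t)%:~R)).
Proof.
elim=> [|l IH] j.
  exists (fun _ => j), (fun _ => 0); split => //; split => //.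
  by rewrite big_geq //= lexx.
set u := viter R A B l.
pose Fv := (fun i : 'I_m => tsharpE (A i j)
   (\big[@emax R/ENInf]_(h < n) tmulE (B i h) (EFin (v h)))).
have hvj := hv j; rewrite /Fop /tsharp /tprod -/Fv in hvj.
have [i0 [a [ha hva]]] : exists i0 a, A i0 j = Some a /\ EFin (rho + v j) = Fv i0.
  case: (ebigmin_att (index_enum 'I_m) Fv) => [e|[i0 e]]; first by rewrite hvj in e.
  rewrite hvj in e; move: e; rewrite /Fv; case ha: (A i0 j) => [a|] // e.
  by exists i0, a; rewrite ha.
rewrite /Fv ha /= in hva.
have step : forall h b, B i0 h = Some b -> exists (p : nat -> 'I_n) (c : nat -> int), p 0%N = j /\
    (forall t, (t < l.+1)%N -> (c t)%:~R <= rho + v (p t) - v (p t.+1) /\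
        - ((Wconst A B)%:Z) <= c t /\ c t <= (Wconst A B)%:Z) /\
    ele (eshift (- a%:~R) (tmulE (B i0 h) (u h))) (EFin ((\sum_(0 <= t < l.+1) c t)%:~R)).
  move=> h b hb.
  have [p [c [p0 [hpc hS]]]] := IH h.
  exists (prep j p), (prep (b - a) c); split => //; split.
    case=> [_|t ht]; rewrite /prep /=; last by apply: hpc.
    rewrite p0; split; last exact: W_bound ha hb.
    have := ele_bigmax (fun k => tmulE (B i0 k) (EFin (v k))) (mem_index_enum h).
    move/(eshift_mono (- a%:~R)).
    rewrite -hva hb /= rmorphB /=; lra.
  rewrite sum_prep hb.
  move: hS; rewrite /u; case: (viter R A B l h) => [|x|] //= hS.
  by rewrite rmorphD rmorphB /=; lra.
rewrite /viter iterS -/(viter R A B l) -/u /Fop /tsharp /tprod.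
pose F := (fun i : 'I_m => tsharpE (A i j) (\big[@emax R/ENInf]_(h < n) tmulE (B i h) (u h))).
have hle := ebigmin_le F (mem_index_enum i0).
have [h1 hh1] := hB i0.
case hb1 : (B i0 h1) hh1 => [b1|] // _.
have [p1 [c1 [? [? _]]]] := step h1 b1 hb1.
case: (ebigmax_att (index_enum 'I_n) (fun h => tmulE (B i0 h) (u h))) => [e|[h0 e]].
  exists p1, c1; split => //; split => //.
  by apply: ele_trans hle _; rewrite /F ha e.
case hb0 : (B i0 h0) e => [b0|] e.
  have [p [c [? [? hS]]]] := step h0 b0 hb0.
  exists p, c; split => //; split => //.
  by apply: ele_trans hle _; rewrite /F ha e; rewrite hb0 in hS.
exists p1, c1; split => //; split => //.
by apply: ele_trans hle _; rewrite /F ha e.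
Qed.

Lemma sum_upW (W l : nat) (c : nat -> int) :
  (forall t, (t < l)%N -> c t <= W%:Z) -> \sum_(0 <= t < l) c t <= (l * W)%N%:Z.
Proof.
elim: l => [|l IH] h; first by rewrite big_geq.
rewrite big_nat_recr //=.
have h1 := IH (fun t ht => h t (ltnW ht)).
have h2 := h l (ltnSn l).
move: h1 h2; set s := \sum_(0 <= i < l) c i; set x := c l; rewrite mulSn PoszD; move=> h1 h2. lia.
Qed.

Lemma first_fail (P : nat -> bool) L : ~~ P L ->
  exists N, ~~ P N /\ (forall l, (l < N)%N -> P l) /\ (N <= L)%N.
Proof.
move=> hL.
have ex : exists k, ~~ P k by exists L.
case: (ex_minnP ex) => N hN hmin.
exists N; split => //; split; last exact: hmin.
move=> l hl; apply/negPn/negP => hPl.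
by have := hmin l hPl; rewrite leqNgt hl.
Qed.

Theorem mainTheorem13 (R : realFieldType) (m n : nat)
    (A B : 'M[option int]_(m, n)) :
  (forall j : 'I_n, exists i : 'I_m, isSome (A i j)) ->
  (forall i : 'I_m, exists h : 'I_n, isSome (B i h)) ->
  (exists (rho : R) (v : 'I_n -> R),
      rho != 0 /\
      forall j, Fop A B (fun h => EFin (v h)) j = EFin (rho + v j)) ->
  exists N : nat,
    ~~ vcont (@viter R m n A B N) /\
    (forall l : nat, (l < N)%N -> vcont (@viter R m n A B l)) /\
    (N <= 2 * n ^ 2 * Wconst A B)%N.
Proof.
move=> hA hB [rho [v [hr hv]]].
case: n A B hA hB v hv => [|n'] A B hA hB v hv.
  apply: first_fail.
  by rewrite /vcont big_ord0.
set n := n'.+1.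
set W := Wconst A B.
set L := (n * (n.-1 * W + 1))%N.
have hLn : (L %/ n = n.-1 * W + 1)%N by rewrite /L mulKn.
suff [hL hW] : ~~ vcont (@viter R m n A B L) /\ (1 <= W)%N.
  have [N [h1 [h2 h3]]] := @first_fail (fun l => vcont (@viter R m n A B l)) L hL.
  exists N; split => //; split => //.
  apply: leq_trans h3 _.
  rewrite /L /n /=; move: hW; rewrite -/W; nia.
have j0 : 'I_n := ord0.
case/orP: (lt_total hr) => hrho.
-
  have key : forall j, exists S : int, S <= -1 /\ - ((L * W)%N%:Z) <= S /\
      ele (@viter R m n A B L j) (EFin S%:~R).
    move=> j.
    have [p [c [_ [hpc hS]]]] := upper_walk hA hB hv L j.
    exists (\sum_(0 <= t < L) c t); split; last split => //.
      have := @cycle_bound R n W (fun k => - v k) (- rho) _ L p (fun t => - c t).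
      rewrite hLn sumrN; move=> h.
      have : (n.-1 * W + 1)%N%:Z - (n.-1 * W)%N%:Z <= - \sum_(0 <= t < L) c t.
        apply: h; first by rewrite oppr_gt0.
        move=> t ht; have [h1 [h2 h3]] := hpc t ht; split; last by lia.
        rewrite rmorphN /=; lra.
      set s := \sum_(0 <= t < L) c t; lia.
    by apply: sum_lowW => t ht; have [_ [h2 _]] := hpc t ht.
  split.
    rewrite /vcont negb_and; apply/orP; left.
    apply: (big_ind (fun x => ~~ ele (EFin 0) x)) => //.
      by move=> x y hx hy; case: (emax_cases x y) => ->.
    move=> j _; have [S [hS1 [_ hS]]] := key j; apply/negP => h.
    have := ele_trans h hS; rewrite /= ler0z; lia.
  rewrite lt0n; apply/negP => /eqP hW0.
  have [S [hS1 [hS2 _]]] := key j0.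
  by move: hS2; rewrite hW0 muln0; lia.
-
  have key : forall j, exists S : int, 1 <= S /\ S <= ((L * W)%N%:Z) /\
      ele (EFin S%:~R) (@viter R m n A B L j).
    move=> j.
    have [p [c [_ [hpc hS]]]] := lower_walk hA hB hv L j.
    exists (\sum_(0 <= t < L) c t); split; last split => //.
      have := @cycle_bound R n W v rho hrho L p c.
      rewrite hLn; move=> h.
      have : (n.-1 * W + 1)%N%:Z - (n.-1 * W)%N%:Z <= \sum_(0 <= t < L) c t.
        apply: h.
        by move=> t ht; have [h1 [h2 h3]] := hpc t ht; split.
      set s := \sum_(0 <= t < L) c t; lia.
    by apply: sum_upW => t ht; have [_ [_ h3]] := hpc t ht.
  split.
    rewrite /vcont negb_and; apply/orP; right.
    apply: (big_ind (fun x => ~~ ele x (EFin 0))) => //.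
      by move=> x y hx hy; case: (emin_cases x y) => ->.
    move=> j _; have [S [hS1 [_ hS]]] := key j; apply/negP => h.
    have := ele_trans hS h; rewrite /= -[0 : R]/((0:int)%:~R) ler_int; lia.
  rewrite lt0n; apply/negP => /eqP hW0.
  have [S [hS1 [hS2 _]]] := key j0.
  by move: hS2; rewrite hW0 muln0; lia.
Qed.
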